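(* There exists a constant $\eta>0$ such that for all lines $H_1,H_2\in\mathcal H$ (in general position) and every $R>0$, $$G(H_1,H_2):=\int_{\mathcal H}\mathbf 1\{c(H_1,H_2,H_3)\in B(0,R)\}\,\Lambda(\mathrm dH_3)\le \eta R.$$
   Context: $\mathcal H$ is the set of lines in $\mathbb{R}^2$, and $\Lambda$ is the translation- and rotation-invariant measure on $\mathcal H$ normalized so that the lines meeting the unit disk have measure $2$; equivalently $\int_{\mathcal H}f(H)\Lambda(\mathrm dH)=\int_{S^1}\int_0^\infty f(H(r,u))\,\mathrm dr\,\sigma(\mathrm du)$, where $H(r,u)$ is the line at distance $r$ from the origin with unit normal $u$, and $\sigma$ is the rotation-invariant measure on $S^1$ with $\sigma(S^1)=2$. For three lines in general position, $c(H_1,H_2,H_3)$ is the incenter of the unique triangle formed by them. $B(0,R)$ is the closed disk of radius $R$ centered at the origin. *)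

(* Defs.v *)
From Stdlib Require Import Reals Lra.
Open Scope R_scope.

(* A line {(x,y) | a x + b y = c} with (a,b) <> (0,0). *)
Record line := mkLine { la : R; lb : R; lc : R }.
Definition is_line (L : line) : Prop := la L <> 0 \/ lb L <> 0.

Definition on_line (L : line) (p : R * R) : Prop :=
  la L * fst p + lb L * snd p = lc L.

(* The line H(r,u) at distance r >= 0 from the origin with unit normal
   u = (cos t, sin t). *)
Definition Hline (r t : R) : line := mkLine (cos t) (sin t) r.

Definition det2 (L1 L2 : line) : R := la L1 * lb L2 - la L2 * lb L1.
Definition not_parallel (L1 L2 : line) : Prop := det2 L1 L2 <> 0.

(* Intersection point of two non-parallel lines (Cramer's rule). *)
Definition inter (L1 L2 : line) : R * R :=
  ((lc L1 * lb L2 - lc L2 * lb L1) / det2 L1 L2,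
   (la L1 * lc L2 - la L2 * lc L1) / det2 L1 L2).

Definition general_position3 (L1 L2 L3 : line) : Prop :=
  is_line L1 /\ is_line L2 /\ is_line L3 /\
  not_parallel L1 L2 /\ not_parallel L1 L3 /\ not_parallel L2 L3 /\
  ~ on_line L3 (inter L1 L2).

Definition dist (p q : R * R) : R :=
  sqrt ((fst p - fst q) ^ 2 + (snd p - snd q) ^ 2).

(* Incenter of the triangle with vertices A = L2∩L3, B = L1∩L3, C = L1∩L2,
   via the standard formula (a A + b B + c C)/(a+b+c), a,b,c the lengths
   of the opposite sides. *)
Definition incenter (L1 L2 L3 : line) : R * R :=
  let A := inter L2 L3 in
  let B := inter L1 L3 in
  let C := inter L1 L2 in
  let a := dist B C in
  let b := dist A C in
  let c := dist A B in
  let s := a + b + c in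
  ((a * fst A + b * fst B + c * fst C) / s,
   (a * snd A + b * snd B + c * snd C) / s).

Definition in_ball (R0 : R) (p : R * R) : Prop :=
  fst p ^ 2 + snd p ^ 2 <= R0 ^ 2.

(* Lebesgue outer measure on the (r,t)-parameter plane, via countable
   covers by closed rectangles [a,b] x [c,d]. *)
Record rect := mkRect { ra : R; rb : R; rc : R; rd : R }.
Definition rect_area (Q : rect) : R :=
  Rmax 0 (rb Q - ra Q) * Rmax 0 (rd Q - rc Q).
Definition in_rect (Q : rect) (r t : R) : Prop :=
  ra Q <= r <= rb Q /\ rc Q <= t <= rd Q.

Definition outer_measure_le (S : R -> R -> Prop) (m : R) : Prop :=
  forall eps, 0 < eps ->
  exists Q : nat -> rect,
    (forall r t, S r t -> exists k, in_rect (Q k) r t) /\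
    (forall n, sum_f_R0 (fun k => rect_area (Q k)) n <= m + eps).

Definition G_set (H1 H2 : line) (R0 : R) (r t : R) : Prop :=
  0 <= r /\ 0 <= t < 2 * PI /\
  general_position3 H1 H2 (Hline r t) /\
  in_ball R0 (incenter H1 H2 (Hline r t)).

(* Λ(dH) = dr σ(du) with σ(du) = dt/π (σ(S^1) = 2), so
   G(H1,H2) = (1/π) * Leb_2(G_set).  "G(H1,H2) <= m" is stated as
   Leb_2(G_set) <= π m. *)
Definition G_le (H1 H2 : line) (R0 m : R) : Prop :=
  outer_measure_le (G_set H1 H2 R0) (PI * m).

(* Main.v *)
Require Import Defs.
From Stdlib Require Import Reals Lra Lia.
Open Scope R_scope.

Definition D3 (L1 L2 L3 : line) : R :=
  la L1 * (lb L2 * lc L3 - lb L3 * lc L2) - lb L1 * (la L2 * lc L3 - la L3 * lc L2)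
  + lc L1 * det2 L2 L3.

Definition ev (L : line) (p : R*R) := la L * fst p + lb L * snd p - lc L.

Lemma ev_inter_l (L1 L2 : line) : not_parallel L1 L2 -> ev L1 (inter L1 L2) = 0.
Proof. unfold not_parallel, ev, inter, det2; destruct L1, L2; simpl in *; intros; field; tauto. Qed.
Lemma ev_inter_r (L1 L2 : line) : not_parallel L1 L2 -> ev L2 (inter L1 L2) = 0.
Proof. unfold not_parallel, ev, inter, det2; destruct L1, L2; simpl in *; intros; field; tauto. Qed.

Lemma ev1A L1 L2 L3 : not_parallel L2 L3 -> ev L1 (inter L2 L3) = - D3 L1 L2 L3 / det2 L2 L3.
Proof. unfold not_parallel, D3, ev, inter, det2; destruct L1, L2, L3; simpl in *; intros; field; tauto. Qed.
Lemma ev3C L1 L2 L3 : not_parallel L1 L2 -> ev L3 (inter L1 L2) = - D3 L1 L2 L3 / det2 L1 L2.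
Proof. unfold not_parallel, D3, ev, inter, det2; destruct L1, L2, L3; simpl in *; intros; field; tauto. Qed.

Lemma sqBC L1 L2 L3 : not_parallel L1 L2 -> not_parallel L1 L3 ->
  (fst (inter L1 L3) - fst (inter L1 L2))^2 + (snd (inter L1 L3) - snd (inter L1 L2))^2
  = (la L1 ^2 + lb L1 ^2) * (D3 L1 L2 L3 / (det2 L1 L2 * det2 L1 L3))^2.
Proof. unfold not_parallel, D3, ev, inter, det2; destruct L1, L2, L3; simpl in *; intros; field; tauto. Qed.
Lemma sqAB L1 L2 L3 : not_parallel L1 L3 -> not_parallel L2 L3 ->
  (fst (inter L2 L3) - fst (inter L1 L3))^2 + (snd (inter L2 L3) - snd (inter L1 L3))^2
  = (la L3 ^2 + lb L3 ^2) * (D3 L1 L2 L3 / (det2 L1 L3 * det2 L2 L3))^2.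
Proof. unfold not_parallel, D3, ev, inter, det2; destruct L1, L2, L3; simpl in *; intros; field; tauto. Qed.

Lemma sqrt_sq_mul (N x : R) : 0 <= N -> sqrt (N * x ^ 2) = sqrt N * Rabs x.
Proof.
  intros HN. rewrite sqrt_mult; [|lra| apply pow2_ge_0].
  f_equal. rewrite <- sqrt_Rsqr_abs. unfold Rsqr. f_equal. ring.
Qed.

Lemma Nline_pos L : is_line L -> 0 < la L ^ 2 + lb L ^ 2.
Proof. intros [H|H]; nra. Qed.

Lemma incenter_eq L1 L2 L3 : general_position3 L1 L2 L3 ->
  Rabs (ev L3 (incenter L1 L2 L3)) / sqrt (la L3 ^2 + lb L3 ^2)
  = Rabs (ev L1 (incenter L1 L2 L3)) / sqrt (la L1 ^2 + lb L1 ^2).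
Proof.
  intros (HL1 & HL2 & HL3 & P12 & P13 & P23 & Hnc).
  pose proof (Nline_pos _ HL1) as N1. pose proof (Nline_pos _ HL3) as N3.
  assert (sN1 : 0 < sqrt (la L1 ^2 + lb L1 ^2)) by (apply sqrt_lt_R0; lra).
  assert (sN3 : 0 < sqrt (la L3 ^2 + lb L3 ^2)) by (apply sqrt_lt_R0; lra).
  assert (HD : D3 L1 L2 L3 <> 0).
  { intro HD. apply Hnc. pose proof (ev3C L1 L2 L3 P12) as E. rewrite HD in E.
    unfold ev, on_line in *. unfold Rdiv in E. lra. }
  unfold incenter.
  set (A := inter L2 L3). set (B := inter L1 L3). set (C := inter L1 L2).
  assert (Ha : Defs.dist B C = sqrt (la L1 ^2 + lb L1 ^2) * Rabs (D3 L1 L2 L3 / (det2 L1 L2 * det2 L1 L3))).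
  { unfold Defs.dist, B, C. rewrite sqBC by auto. apply sqrt_sq_mul. lra. }
  assert (Hc : Defs.dist A B = sqrt (la L3 ^2 + lb L3 ^2) * Rabs (D3 L1 L2 L3 / (det2 L1 L3 * det2 L2 L3))).
  { unfold Defs.dist, A, B. rewrite sqAB by auto. apply sqrt_sq_mul. lra. }
  set (a := Defs.dist B C). set (b := Defs.dist A C). set (c := Defs.dist A B).
  assert (a0 : 0 <= a) by apply sqrt_pos.
  assert (b0 : 0 <= b) by apply sqrt_pos.
  assert (c0 : 0 <= c) by apply sqrt_pos.
  assert (apos : 0 < a).
  { unfold a; rewrite Ha. apply Rmult_lt_0_compat; auto. apply Rabs_pos_lt.
    unfold Rdiv. apply Rmult_integral_contrapositive_currified; auto.
    apply Rinv_neq_0_compat. apply Rmult_integral_contrapositive_currified; auto. }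
  assert (s0 : a + b + c <> 0) by lra.
  assert (E1B : ev L1 B = 0) by (apply ev_inter_l; auto).
  assert (E1C : ev L1 C = 0) by (apply ev_inter_l; auto).
  assert (E3A : ev L3 A = 0) by (apply ev_inter_r; auto).
  assert (E3B : ev L3 B = 0) by (apply ev_inter_r; auto).
  assert (K1 : forall L, ev L ((a * fst A + b * fst B + c * fst C) / (a+b+c),
                 (a * snd A + b * snd B + c * snd C) / (a+b+c))
                = (a * ev L A + b * ev L B + c * ev L C) / (a+b+c)).
  { intro L. unfold ev; simpl. field. auto. }
  rewrite !K1, E1B, E1C, E3A, E3B.
  unfold A, C. rewrite (ev1A L1 L2 L3), (ev3C L1 L2 L3) by auto.
  replace ((a * 0 + b * 0 + c * (- D3 L1 L2 L3 / det2 L1 L2)) / (a + b + c))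
    with (c * (- D3 L1 L2 L3 / det2 L1 L2) * / (a + b + c)) by (field; auto).
  replace ((a * (- D3 L1 L2 L3 / det2 L2 L3) + b * 0 + c * 0) / (a + b + c))
    with (a * (- D3 L1 L2 L3 / det2 L2 L3) * / (a + b + c)) by (field; auto).
  set (si := / (a + b + c)).
  set (X := - D3 L1 L2 L3 / det2 L1 L2). set (Y := - D3 L1 L2 L3 / det2 L2 L3).
  rewrite !Rabs_mult, (Rabs_pos_eq c), (Rabs_pos_eq a) by lra.
  unfold c, a. rewrite Hc, Ha.
  set (X' := D3 L1 L2 L3 / (det2 L1 L2 * det2 L1 L3)).
  set (Y' := D3 L1 L2 L3 / (det2 L1 L3 * det2 L2 L3)).
  assert (key : Rabs Y' * Rabs X = Rabs X' * Rabs Y).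
  { rewrite <- !Rabs_mult. unfold X, Y, X', Y'.
    f_equal. unfold not_parallel in *. field. auto. }
  replace (sqrt (la L3 ^ 2 + lb L3 ^ 2) * Rabs Y' * Rabs X * Rabs si / sqrt (la L3 ^ 2 + lb L3 ^ 2))
    with (Rabs Y' * Rabs X * Rabs si) by (field; lra).
  replace (sqrt (la L1 ^ 2 + lb L1 ^ 2) * Rabs X' * Rabs Y * Rabs si / sqrt (la L1 ^ 2 + lb L1 ^ 2))
    with (Rabs X' * Rabs Y * Rabs si) by (field; lra).
  rewrite key. reflexivity.
Qed.

Lemma cs_bound (p q x y R0 : R) : 0 < R0 -> x ^ 2 + y ^ 2 <= R0 ^ 2 ->
  Rabs (p * x + q * y) <= sqrt (p ^ 2 + q ^ 2) * R0.
Proof.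
  intros HR Hb.
  assert (Hs : 0 <= sqrt (p^2+q^2)) by apply sqrt_pos.
  assert (Hss : sqrt (p^2+q^2) * sqrt (p^2+q^2) = p^2+q^2) by (apply sqrt_sqrt; nra).
  assert (H2 : (p*x+q*y)^2 <= (sqrt (p^2+q^2) * R0)^2).
  { assert ((p*x+q*y)^2 <= (p^2+q^2)*(x^2+y^2)) by (pose proof (pow2_ge_0 (p*y - q*x)); nra).
    assert ((p^2+q^2)*(x^2+y^2) <= (p^2+q^2)*R0^2) by (apply Rmult_le_compat_l; nra).
    replace ((sqrt (p ^ 2 + q ^ 2) * R0) ^ 2) with ((p^2+q^2)*R0^2) by (rewrite <- Hss at 1; ring).
    lra. }
  assert (HS : 0 <= sqrt (p ^ 2 + q ^ 2) * R0) by nra.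
  destruct (Rle_dec (Rabs (p*x+q*y)) (sqrt (p ^ 2 + q ^ 2) * R0)) as [h|h]; auto.
  rewrite <- (pow2_abs (p*x+q*y)) in H2. nra.
Qed.

Lemma Gset_bound (H1 H2 : line) (R0 r t : R) : is_line H1 -> 0 < R0 ->
  G_set H1 H2 R0 r t ->
  let d0 := Rabs (lc H1) / sqrt (la H1 ^ 2 + lb H1 ^ 2) in
  (d0 - 2 * R0 <= r <= d0 + 2 * R0 \/ - d0 - 2 * R0 <= r <= - d0 + 2 * R0) /\
  0 <= t <= 2 * PI.
Proof.
  intros HL1 HR (Hr & Ht & Hg & Hb) d0.
  split; [| lra].
  pose proof (incenter_eq _ _ _ Hg) as E.
  set (I := incenter H1 H2 (Hline r t)) in *.
  unfold in_ball in Hb. fold I in Hb.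
  cbn [la lb lc Hline] in E.
  replace (cos t ^ 2 + sin t ^ 2) with 1 in E by (rewrite <- (sin2_cos2 t); unfold Rsqr; ring).
  rewrite sqrt_1 in E.
  pose proof (Nline_pos _ HL1) as N1.
  assert (sN1 : 0 < sqrt (la H1 ^2 + lb H1 ^2)) by (apply sqrt_lt_R0; lra).
  pose proof (cs_bound (cos t) (sin t) (fst I) (snd I) R0 HR Hb) as B3.
  replace (cos t ^ 2 + sin t ^ 2) with 1 in B3 by (rewrite <- (sin2_cos2 t); unfold Rsqr; ring).
  rewrite sqrt_1 in B3.
  pose proof (cs_bound (la H1) (lb H1) (fst I) (snd I) R0 HR Hb) as B1.
  set (rho := Rabs (ev H1 I) / sqrt (la H1 ^ 2 + lb H1 ^ 2)) in *.
  assert (Hrho : d0 - R0 <= rho <= d0 + R0).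
  { unfold rho, d0, ev in *. set (s := sqrt (la H1 ^ 2 + lb H1 ^ 2)) in *.
    set (z := la H1 * fst I + lb H1 * snd I) in *.
    assert (Rabs (z - lc H1) - Rabs (lc H1) <= s * R0).
    { pose proof (Rabs_triang z (- lc H1)) as T. rewrite Rabs_Ropp in T.
      unfold Rminus. lra. }
    assert (Rabs (lc H1) - Rabs (z - lc H1) <= s * R0).
    { pose proof (Rabs_triang (lc H1 - z) z) as T.
      replace (lc H1 - z + z) with (lc H1) in T by ring.
      rewrite Rabs_minus_sym in T. lra. }
    split; apply (Rmult_le_reg_r s); auto; unfold Rdiv;
      rewrite Rmult_plus_distr_r || rewrite Rmult_minus_distr_r;
      rewrite !Rmult_assoc, Rinv_l by lra; lra. }
  unfold ev in E. cbn [la lb lc Hline] in E.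
  set (w := cos t * fst I + sin t * snd I) in *.
  destruct (Rcase_abs (w - r)); [rewrite Rabs_left in E by lra | rewrite Rabs_right in E by lra];
  rewrite Rdiv_1_r in E || (unfold Rdiv in E; rewrite Rinv_1, Rmult_1_r in E);
  destruct (Rcase_abs w); [rewrite Rabs_left in B3 by lra | rewrite Rabs_right in B3 by lra | rewrite Rabs_left in B3 by lra | rewrite Rabs_right in B3 by lra]; lra.
Qed.

Theorem lemma3p3 :
  exists eta : R, 0 < eta /\
    forall (H1 H2 : line) (R0 : R),
      is_line H1 -> is_line H2 -> not_parallel H1 H2 ->
      0 < R0 ->
      G_le H1 H2 R0 (eta * R0).
Proof.
  exists 16. split; [lra|].
  intros H1 H2 R0 HL1 HL2 HP HR.
  set (d0 := Rabs (lc H1) / sqrt (la H1 ^ 2 + lb H1 ^ 2)).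
  intros eps Heps.
  exists (fun k => match k with
                   | O => mkRect (d0 - 2 * R0) (d0 + 2 * R0) 0 (2 * PI)
                   | S O => mkRect (- d0 - 2 * R0) (- d0 + 2 * R0) 0 (2 * PI)
                   | _ => mkRect 0 0 0 0 end).
  split.
  - intros r t Hg. destruct (Gset_bound H1 H2 R0 r t HL1 HR Hg) as [[h|h] ht].
    + exists O. unfold in_rect; simpl. fold d0 in h. lra.
    + exists 1%nat. unfold in_rect; simpl. fold d0 in h. lra.
  - pose proof PI_RGT_0.
    assert (A0 : forall k, 0 <= rect_area (match k with
                   | O => mkRect (d0 - 2 * R0) (d0 + 2 * R0) 0 (2 * PI)
                   | S O => mkRect (- d0 - 2 * R0) (- d0 + 2 * R0) 0 (2 * PI)
                   | _ => mkRect 0 0 0 0 end)).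
    { intro k. unfold rect_area. apply Rmult_le_pos; apply Rmax_l. }
    assert (Ar : forall k, (2 <= k)%nat -> rect_area (match k with
                   | O => mkRect (d0 - 2 * R0) (d0 + 2 * R0) 0 (2 * PI)
                   | S O => mkRect (- d0 - 2 * R0) (- d0 + 2 * R0) 0 (2 * PI)
                   | _ => mkRect 0 0 0 0 end) = 0).
    { intros [|[|k]] hk; [lia|lia|]. unfold rect_area; simpl.
      rewrite Rminus_0_r, Rmax_left by lra. ring. }
    assert (a01 : rect_area (mkRect (d0 - 2 * R0) (d0 + 2 * R0) 0 (2 * PI)) +
                  rect_area (mkRect (- d0 - 2 * R0) (- d0 + 2 * R0) 0 (2 * PI)) = PI * (16 * R0)).
    { unfold rect_area; simpl. rewrite !Rmax_right by lra. ring. }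
    intro n. induction n as [|n IH].
    + simpl. specialize (A0 1%nat). simpl in A0. lra.
    + simpl. destruct n as [|n].
      * simpl. lra.
      * rewrite (Ar (S (S n))) by lia. lra.
Qed.
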